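(* Let \(E\in\mathcal{B}_\infty\) with \(\mu(E)<\infty\). Then the restricted space \((E,\mu)\) is purely nonatomic.
   Context: Let $\mathcal{B}$ be the Borel $\sigma$-algebra of $\mathbb{R}$, $\lambda$ the Lebesgue measure, and $\mathcal{B}_{\infty}$ the $\sigma$-algebra on $\mathbb{R}^{\mathbb{N}}$ generated by the cylinder sets $\prod_{i=1}^{m}C_{i}\times\prod_{i=m+1}^{\infty}\mathbb{R}$ with $C_i\in\mathcal{B}$, $m\in\mathbb{N}$. Let $\mathcal{F}(\mathcal{B},\lambda)$ be the set of finite rectangles $\prod_{i\in\mathbb{N}}C_{i}$ with $C_i\in\mathcal{B}$ and $\prod_{i}\lambda(C_i)\in[0,\infty)$, with $\mathrm{vol}(\prod_{i}C_i):=\prod_i\lambda(C_i)$. The measure $\mu$ is the restriction to $\mathcal{B}_{\infty}$ of the outer measure $\mu^{\ast}(A):=\inf\{\sum_{n}\mathrm{vol}(\mathscr{C}_{n}) : \mathscr{C}_{n}\in\mathcal{F}(\mathcal{B},\lambda),\ A\subset\bigcup_{n}\mathscr{C}_{n}\}$ ($\inf\varnothing=\infty$). A measure space is purely nonatomic if it has no atoms, i.e., no measurable $A$ with positive measure such that every measurable $B\subset A$ has measure $0$ or that of $A$. *)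

(* Defs.v *)
From mathcomp Require Import all_boot all_order all_algebra.
From mathcomp Require Import all_classical all_reals all_analysis.
Set Implicit Arguments. Unset Strict Implicit. Unset Printing Implicit Defensive.
Import Order.TTheory GRing.Theory Num.Theory.
Local Open Scope classical_set_scope.
Local Open Scope ring_scope.

Section Rinfty.
Variable R : realType.

(* Borel sets of R: the canonical sigma-algebra of measurableTypeR R
   (generated by the half-open intervals). *)
Definition borelR (C : set R) : Prop := @measurable _ (measurableTypeR R) C.

(* cylinder sets  prod_{i<m} C_i x prod_{i>=m} R  (indices shifted to start at 0) *)
Definition cylinder (A : set (nat -> R)) : Prop :=
  exists (m : nat) (C : nat -> set R), (forall i, borelR (C i)) /\
    A = [set x | forall i, (i < m)%N -> C i (x i)].

Definition B_infty : set (set (nat -> R)) := <<s cylinder >>.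

Definition rect (C : nat -> set R) : set (nat -> R) :=
  [set x | forall i, C i (x i)].

Definition partial_vol (C : nat -> set R) (n : nat) : \bar R :=
  (\prod_(i < n) (@lebesgue_measure R (C i)))%E.

Definition finite_rect (C : nat -> set R) : Prop :=
  (forall i, borelR (C i)) /\
  exists r : R, partial_vol C @ \oo --> r%:E.

Definition vol (C : nat -> set R) : \bar R := lim (partial_vol C @ \oo).

(* the outer measure mu^* (inf of empty set is +oo) *)
Definition mu_star (A : set (nat -> R)) : \bar R :=
  ereal_inf [set (\sum_(0 <= n <oo) vol (C n))%E |
    C in [set C : nat -> nat -> set R |
          (forall n, finite_rect (C n)) /\ A `<=` \bigcup_n rect (C n)]].

(* mu := restriction of mu^* to B_infty; an atom of (E, mu) is a
   B_infty-measurable subset A of E with mu(A) > 0 such that every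
   measurable B ⊆ A has measure 0 or mu(A). *)
Definition atom_in (E A : set (nat -> R)) : Prop :=
  B_infty A /\ A `<=` E /\ (0 < mu_star A)%E /\
  forall B, B_infty B -> B `<=` A -> mu_star B = 0%E \/ mu_star B = mu_star A.

Definition purely_nonatomic_on (E : set (nat -> R)) : Prop :=
  ~ exists A, atom_in E A.

End Rinfty.

(* Main.v *)
Require Import Defs.
From mathcomp Require Import all_boot all_order all_algebra.
From mathcomp Require Import all_classical all_reals all_analysis.
From mathcomp Require Import ring.
Set Implicit Arguments. Unset Strict Implicit. Unset Printing Implicit Defensive.
Import Order.TTheory GRing.Theory Num.Theory.
Local Open Scope classical_set_scope.
Local Open Scope ring_scope.

Section S.
Variable R : realType.
Local Open Scope ereal_scope.

Lemma partial_vol_ge0 (C : nat -> set R) n : 0 <= partial_vol C n.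
Proof. by apply: prode_ge0 => i _; exact: measure_ge0. Qed.

Lemma vol_ge0 (C : nat -> set R) : finite_rect C -> 0 <= vol C.
Proof.
move=> [_ [r hr]]; rewrite /vol; apply: lime_ge; first by apply/cvg_ex; exists r%:E.
by near=> n; exact: partial_vol_ge0.
Unshelve. all: by end_near. Qed.

Definition covers (A : set (nat -> R)) :=
  [set C : nat -> nat -> set R |
          (forall n, finite_rect (C n)) /\ A `<=` \bigcup_n rect (C n)].

Lemma mu_starE (A : set (nat -> R)) : mu_star A =
  ereal_inf [set (\sum_(0 <= n <oo) vol (C n))%E | C in covers A].
Proof. by []. Qed.

Lemma mu_star_ge0 (A : set (nat -> R)) : 0 <= mu_star A.
Proof.
apply: le_ereal_inf_tmp => x [B [mB AB] <-{x}]; rewrite lime_ge //=.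
  by apply: is_cvg_nneseries => n _ _; exact: (vol_ge0 (mB n)).
by near=> n; rewrite sume_ge0// => i _; exact: (vol_ge0 (mB i)).
Unshelve. all: by end_near. Qed.

Lemma le_mu_star : {homo @mu_star R : A B / A `<=` B >-> A <= B}.
Proof.
move=> A B AB; apply/ereal_inf_le_tmp => x [B' [mB' BB']].
by move=> <-{x}; exists B' => //; split => //; apply: subset_trans AB BB'.
Qed.


Lemma mu_star_sigma_subadditive (A : nat -> set (nat -> R)) :
  mu_star (\bigcup_n A n) <= \sum_(i <oo) mu_star (A i).
Proof.
have [[i ioo]|] := pselect (exists i, mu_star (A i) = +oo).
  rewrite (eseries_pinfty _ _ ioo) ?leey// => n _.
  by rewrite -ltNye (lt_le_trans _ (mu_star_ge0 _)).
rewrite -forallNE => Aoo.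
suff add2e (e : {posnum R}) :
    mu_star (\bigcup_n A n) <= \sum_(i <oo) mu_star (A i) + e%:num%:E.
  by apply/lee_addgt0Pr => _/posnumP[].
rewrite (le_trans _ (epsilon_trick _ _ _))//; last first.
  by move=> n; exact: mu_star_ge0.
pose P n (B : nat -> nat -> set R) := covers (A n) B /\
  \sum_(k <oo) vol (B k) <= mu_star (A n) + (e%:num / (2 ^ n.+1)%:R)%:E.
have [G PG] : {G : (nat -> nat -> set R)^nat & forall n, P n (G n)}.
  apply: (@choice _ _ P) => n; rewrite /P mu_starE.
  set S := (X in ereal_inf X); move infS : (ereal_inf S) => iS.
  case: iS infS => [r Sr|Soo|Soo].
  - have en1 : (0 < e%:num / (2 ^ n.+1)%:R)%R by [].
    have /(lb_ereal_inf_adherent en1) : ereal_inf S \is a fin_num by rewrite Sr.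
    move=> [x [B [mB AnB muBx] xS]].
    by exists B; split => //; rewrite muBx -Sr; exact/ltW.
  - by have := Aoo n; rewrite mu_starE Soo.
  - suff : lbound S 0 by move/le_ereal_inf_tmp; rewrite Soo.
    move=> /= _ [B [mB AnB] <-]; apply: nneseries_ge0 => k _ _.
    exact: vol_ge0.
have muG_ge0 x : 0 <= (@vol R \o uncurry G) x.
  by case: x => i j /=; exact: vol_ge0 ((PG i).1.1 j).
apply: (@le_trans _ _ (\esum_(i in setT) (@vol R \o uncurry G) i)).
  rewrite mu_starE; apply: ereal_inf_lbound => /=.
  have /card_esym/ppcard_eqP[f] := card_nat2.
  exists (uncurry G \o f).
    split => [i|]; first by rewrite /comp; case: (f i) => a b /=; exact: (PG a).1.1 b.
    apply: (@subset_trans _  (\bigcup_n \bigcup_k rect (G n k))) => [t [i _]|].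
      by move=> /((PG i).1.2) -[j _ ?]; exists i => //; exists j.
    move=> t [i _ [j _ Bijt]]; exists (f^-1%FUN (i, j)) => //=.
    by rewrite invK ?inE.
  rewrite -(esum_pred_image (@vol R \o uncurry G) _ xpredT) ?[fun=> _]set_true//.
  by rewrite image_eq.
rewrite (_ : esum _ _ = \sum_(i <oo) \sum_(j <oo ) vol (G i j)); last first.
  pose J : nat -> set (nat * nat) := fun i => [set (i, j) | j in setT].
  rewrite (_ : setT = \bigcup_k J k); last first.
    by rewrite predeqE => -[a b]; split => // _; exists a => //; exists b.
  rewrite esum_bigcupT /=; last 2 first.
    - apply/trivIsetP => i j _ _ ij.
      rewrite predeqE => -[n m] /=; split => //= -[] [_] _ [<-{n} _].
      by move=> [m' _] [] /esym/eqP; rewrite (negbTE ij).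
    - by move=> x; exact: (muG_ge0 x).
  rewrite -(image_id [set: nat]) -fun_true esum_pred_image//; last first.
    by move=> n _; apply: esum_ge0 => x _; exact: (muG_ge0 x).
  apply: eq_eseriesr => /= j _.
  rewrite -(esum_pred_image (@vol R \o uncurry G) (pair j) predT)//=.
  all: try (by move=> k _; exact: (muG_ge0 (j, k))); try (by move=> ? ? _ _; exact: (@can_inj _ _ _ snd)).
  by congr esum; rewrite predeqE => -[a b]; split; move=> [i _ <-]; exists i.
apply: lee_lim.
- apply: is_cvg_nneseries => n *.
  by apply: nneseries_ge0 => m *; exact: (muG_ge0 (n, m)).
- by apply: is_cvg_nneseries => n *; apply: adde_ge0 => //; exact: mu_star_ge0.
- by near=> n; apply: lee_sum => i _; exact: (PG i).2.
Unshelve. all: by end_near. Qed.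


Lemma near_succ (P : nat -> Prop) : (forall m, P m.+1) -> \forall n \near \oo, P n.
Proof. by move=> h; exists 1%N => // -[|m]. Qed.

Definition emptyrect : nat -> set R := fun _ => set0.

Lemma partial_vol_empty n : partial_vol emptyrect n.+1 = 0.
Proof. by rewrite /partial_vol big_ord_recl /emptyrect measure0 mul0e. Qed.

Lemma finite_rect_empty : finite_rect emptyrect.
Proof.
split; first by move=> i; exact: measurable0.
by exists 0%R; apply: cvg_near_cst; apply: near_succ => m; exact: partial_vol_empty.
Qed.

Lemma vol_empty : vol emptyrect = 0.
Proof.
by rewrite /vol; apply: lim_near_cst => //; apply: near_succ => m; exact: partial_vol_empty.
Qed.

Lemma mu_star_le_vol (X : set (nat -> R)) D :
  finite_rect D -> X `<=` rect D -> mu_star X <= vol D.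
Proof.
move=> fD XD; rewrite mu_starE; apply: ereal_inf_lbound.
exists (fun n => if n == 0%N then D else emptyrect).
  split; first by case => [|n]//=; exact: finite_rect_empty.
  by move=> x /XD Dx; exists 0%N.
apply: lim_near_cst => //; apply: near_succ => m.
by rewrite big_nat_recl//= big1_seq ?adde0// => i _; exact: vol_empty.
Qed.

Lemma B_infty_bigcap (F : nat -> set (nat -> R)) : (forall n, B_infty (F n)) -> B_infty (\bigcap_n F n).
Proof.
move=> hF.
have -> : \bigcap_n F n = setT `\` \bigcup_n (setT `\` F n).
  apply/seteqP; split => [x Fx|x [_ Fx] n _].
    by split => // -[n _ [_ /(_ (Fx n I))]].
  by apply: contrapT => Fn; apply: Fx; exists n => //.
apply: sigma_algebraCD; apply: sigma_algebra_bigcup => n.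
apply: sigma_algebraCD; exact: hF.
Qed.

Lemma B_inftyI (A B : set (nat -> R)) : B_infty A -> B_infty B -> B_infty (A `&` B).
Proof.
move=> hA hB.
have -> : A `&` B = \bigcap_n (if n == 0%N then A else B).
  apply/seteqP; split => [x [Ax Bx] [|n] _ //|x h]; split; first exact: (h 0%N I).
  exact: (h 1%N I).
by apply: B_infty_bigcap => -[|n].
Qed.

Lemma B_infty_rect (D : nat -> set R) : (forall i, borelR (D i)) -> B_infty (rect D).
Proof.
move=> bD.
have -> : rect D = \bigcap_m [set x | forall i, (i < m)%N -> D i (x i)].
  apply/seteqP; split => [x Dx m _ i _|x Dx i]; first exact: Dx.
  exact: (Dx i.+1 I i (ltnSn i)).
apply: B_infty_bigcap => m.
by apply: sub_sigma_algebra; exists m, D; split.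
Qed.


Notation lam := (@lebesgue_measure R).

Definition slice (C : nat -> set R) (I : set R) : nat -> set R :=
  fun i => if i == 0%N then C 0%N `&` I else C i.

Definition tailp (C : nat -> set R) n := \prod_(i < n) lam (C i.+1).

Lemma partial_volS C n : partial_vol C n.+1 = lam (C 0%N) * tailp C n.
Proof. by rewrite /partial_vol big_ord_recl. Qed.

Lemma tailp_ge0 C n : 0 <= tailp C n.
Proof. by apply: prode_ge0 => i _; exact: measure_ge0. Qed.

Lemma first_side_fin C v : partial_vol C @ \oo --> v%:E -> v != 0%R ->
  exists c, lam (C 0%N) = c%:E /\ (0 < c)%R.
Proof.
move=> hC v0.
have hu : (fun n => partial_vol C n.+1) @ \oo --> v%:E.
  by rewrite (cvg_shiftS (fun n => partial_vol C n)).
have contra : ~ \forall n \near \oo, partial_vol C n.+1 = 0.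
  move=> h0; have {}h0 : (fun n => partial_vol C n.+1) @ \oo --> (0 : \bar R) by apply: cvg_near_cst.
  have := cvg_lim (@ereal_hausdorff R) h0; rewrite (cvg_lim (@ereal_hausdorff R) hu).
  by move=> /(_ _) [] v0E; move: v0; rewrite v0E eqxx.
have [hfin _] := (fine_cvgP _ _).1 hu.
have cge0 := measure_ge0 lam (C 0%N).
case E0 : (lam (C 0%N)) cge0 => [c| |] cge0.
- have [c0|c0] := eqVneq c 0%R.
    by exfalso; apply: contra; apply: near_succ => m; rewrite partial_volS E0 c0 mul0e.
  by exists c; split => //; rewrite lt0r c0 /= -lee_fin -E0.
- exfalso; apply: contra; apply: filterS hfin => n; rewrite partial_volS E0.
  have := tailp_ge0 C n; rewrite le_eqVlt => /orP[/eqP <-|Qp]; first by rewrite mule0.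
  by rewrite gt0_mulye.
- by exfalso; suff : (0 <= (-oo : \bar R)) by []; rewrite -E0; exact: measure_ge0.
Qed.


Lemma slice_vol C I v c h : (forall i, borelR (C i)) ->
  partial_vol C @ \oo --> v%:E -> lam (C 0%N) = c%:E -> (0 < c)%R -> (0 <= v)%R ->
  borelR I -> lam I <= h%:E ->
  finite_rect (slice C I) /\ vol (slice C I) <= (h / c * v)%:E.
Proof.
move=> hC hv cE c0 v0 hI hE.
have mCI : borelR (C 0%N `&` I) by exact: (@measurableI _ (measurableTypeR R) _ _ (hC 0%N) hI).
have leI : lam (C 0%N `&` I) <= h%:E.
  by apply: le_trans hE; apply: le_measure; rewrite ?inE//; exact: subIsetr.
have finCI : lam (C 0%N `&` I) \is a fin_num.
  by rewrite ge0_fin_numE ?measure_ge0// (le_lt_trans leI) ?ltry.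
set d := fine (lam (C 0%N `&` I)).
have dE : lam (C 0%N `&` I) = d%:E by rewrite fineK.
have dh : (d <= h)%R by rewrite -lee_fin -dE.
have eq n : partial_vol (slice C I) n.+1 = (d / c)%:E * partial_vol C n.+1.
  rewrite !partial_volS /= dE cE muleA -EFinM divfK ?gt_eqF//.
have hs : partial_vol (slice C I) @ \oo --> ((d / c) * v)%:E.
  rewrite -(cvg_shiftS (partial_vol (slice C I))) /=.
  have -> : (fun n => partial_vol (slice C I) n.+1) = (fun n => (d / c)%:E * partial_vol C n.+1).
    by apply/funext => n; exact: eq.
  have hu : (fun n => partial_vol C n.+1) @ \oo --> v%:E.
    by rewrite (cvg_shiftS (partial_vol C)).
  have := @cvgeZl _ _ _ (fun n => partial_vol C n.+1) v%:E (d / c)%:E isT hu.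
  by rewrite -EFinM.
split.
  split; last by exists (d / c * v)%R.
  by case => [|i]; [exact: mCI | exact: hC].
rewrite /vol (cvg_lim (@ereal_hausdorff R) hs) lee_fin.
by rewrite ler_wpM2r// ler_pM2r ?invr_gt0.
Qed.

Definition slab (h : R) (j : nat) : set R :=
  match @unpickle int j with
  | Some z => `[(z%:~R * h)%R, (z%:~R * h + h)%R[
  | None => set0
  end.

Lemma slab_meas h j : borelR (slab h j).
Proof. by rewrite /slab; case: unpickle => [z|]; [exact: measurable_itv | exact: measurable0]. Qed.

Lemma slab_lam h j : (0 < h)%R -> lam (slab h j) <= h%:E.
Proof.
move=> h0; rewrite /slab; case: unpickle => [z|]; last by rewrite measure0 lee_fin ltW.
by rewrite lebesgue_measure_itv /= lte_fin ltrDl h0 -EFinD addrAC subrr add0r.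
Qed.

Lemma slab_cover h t : (0 < h)%R -> exists j, slab h j t.
Proof.
move=> h0; exists (pickle (Num.floor (t / h))); rewrite /slab pickleK /=.
have /andP[h1 h2] := floor_itv (t / h).
rewrite in_itv /=; apply/andP; split; first by rewrite -ler_pdivlMr.
by move: h2; rewrite ltr_pdivrMr// intrD mulrDl mul1r.
Qed.

End S.

Theorem propositionA5 (R : realType) (E : set (nat -> R)) :
  B_infty E -> (mu_star E < +oo)%E -> purely_nonatomic_on E.
Proof.
move=> _ Efin [A [BA [AE [Apos Hat]]]].
have Afin : (mu_star A < +oo)%E := le_lt_trans (le_mu_star AE) Efin.
have [a aE] : exists a, mu_star A = a%:E.
  exists (fine (mu_star A)); rewrite fineK//.
  by rewrite ge0_fin_numE ?mu_star_ge0.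
have a0 : (0 < a)%R by rewrite -lte_fin -aE.
have [C [fC AC]] : exists C, covers A C.
  apply: contrapT => nC; move: Afin; rewrite mu_starE.
  suff -> : [set (\sum_(0 <= n <oo) vol (C n))%E | C in covers A] = set0.
    by rewrite ereal_inf0.
  by apply/seteqP; split => // x [C hC _]; apply: nC; exists C.
have key : forall n, mu_star (A `&` rect (C n)) = 0%E.
  move=> n; apply/eqP; rewrite eq_le mu_star_ge0 andbT.
  have [hb [r hr]] := fC n.
  have vE : vol (C n) = r%:E by exact: (cvg_lim (@ereal_hausdorff R) hr).
  have r0 : (0 <= r)%R by rewrite -lee_fin -vE; exact: vol_ge0.
  have [r00|rn0] := eqVneq r 0%R.
    by apply: le_trans (mu_star_le_vol (fC n) (@subIsetr _ _ _)) _; rewrite vE r00.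
  have [c [cE c0]] := first_side_fin hr rn0.
  have rp : (0 < r)%R by rewrite lt0r rn0.
  pose h := (a * c / (2 * r))%R.
  have hp : (0 < h)%R by rewrite /h divr_gt0 ?mulr_gt0.
  have hE : (h / c * r = a / 2)%R.
    by rewrite /h; field; rewrite ?gt_eqF.
  have sub : A `&` rect (C n) `<=`
      \bigcup_j (A `&` rect (slice (C n) (slab h j))).
    move=> x [Ax Rx]; have [j hj] := slab_cover (x 0%N) hp.
    by exists j => //; split => // -[|i]; [split => //; exact: Rx | exact: Rx].
  apply: le_trans (le_mu_star sub) _; apply: le_trans (mu_star_sigma_subadditive _) _.
  rewrite eseries0 // => j _ _.
  have [fs vs] := slice_vol hb hr cE c0 r0 (slab_meas h j) (slab_lam j hp).
  have lt : (mu_star (A `&` rect (slice (C n) (slab h j))) < mu_star A)%E.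
    apply: le_lt_trans (mu_star_le_vol fs (@subIsetr _ _ _)) _.
    apply: le_lt_trans vs _; rewrite aE lte_fin hE.
    by rewrite ltr_pdivrMr// ltr_pMr// ltr1n.
  case: (Hat _ (B_inftyI BA (B_infty_rect fs.1)) (@subIsetl _ _ _)) => // eqA.
  by rewrite eqA ltxx in lt.
have : (mu_star A <= 0)%E.
  have sub : A `<=` \bigcup_n (A `&` rect (C n)).
    by move=> x Ax; have [n _ Rx] := AC x Ax; exists n.
  apply: le_trans (le_mu_star sub) _; apply: le_trans (mu_star_sigma_subadditive _) _.
  by rewrite eseries0 // => j _ _; exact: key.
by rewrite leNgt Apos.
Qed.
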